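(* Let $X$ and $Y$ be Banach spaces and let $T\in B(X)$ and $S\in B(Y)$ be equivalent after extension. If $S$ is compact, then there exists a closed subspace of $Y$ of finite codimension that is topologically isomorphic to a closed subspace of $X$.
   Context: All Banach spaces are complex; $B(X,Y)$ denotes bounded linear operators; invertibility means bounded inverse; $X\oplus Y$ is the $\ell^2$-direct sum and $\mathrm{id}_X$ the identity. Operators $T\in B(X)$ and $S\in B(Y)$ are equivalent after extension if there exist Banach spaces $X'$, $Y'$ and invertible $E\in B(Y\oplus Y',X\oplus X')$, $F\in B(X\oplus X',Y\oplus Y')$ with $\begin{bmatrix}T&0\\0&\mathrm{id}_{X'}\end{bmatrix}=E\begin{bmatrix}S&0\\0&\mathrm{id}_{Y'}\end{bmatrix}F$. *)

(* Defs.v *)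
From Stdlib Require Import Reals.
Open Scope R_scope.
Set Implicit Arguments.

Record C := mkC { Re : R ; Im : R }.
Definition C0 : C := mkC 0 0.
Definition C1 : C := mkC 1 0.
Definition Cadd (a b : C) : C := mkC (Re a + Re b) (Im a + Im b).
Definition Cmul (a b : C) : C :=
  mkC (Re a * Re b - Im a * Im b) (Re a * Im b + Im a * Re b).
Definition Cabs (a : C) : R := sqrt (Re a ^ 2 + Im a ^ 2).

Record NVS := mkNVS {
  car :> Type ;
  vzero : car ;
  vadd : car -> car -> car ;
  vopp : car -> car ;
  vscal : C -> car -> car ;
  vnorm : car -> R }.
Arguments vzero {n}.
Arguments vadd {n}.
Arguments vopp {n}.
Arguments vscal {n}.
Arguments vnorm {n}.

Definition vsub {V : NVS} (x y : V) : V := vadd x (vopp y).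

Definition conv {V : NVS} (u : nat -> V) (l : V) : Prop :=
  forall eps, eps > 0 -> exists N, forall n, (n >= N)%nat -> vnorm (vsub (u n) l) < eps.
Definition cauchy {V : NVS} (u : nat -> V) : Prop :=
  forall eps, eps > 0 -> exists N, forall m n, (m >= N)%nat -> (n >= N)%nat ->
    vnorm (vsub (u m) (u n)) < eps.

Record Banach := mkBanach {
  bnvs :> NVS ;
  add_assoc : forall x y z : bnvs, vadd x (vadd y z) = vadd (vadd x y) z ;
  add_comm : forall x y : bnvs, vadd x y = vadd y x ;
  add_zero : forall x : bnvs, vadd vzero x = x ;
  add_opp : forall x : bnvs, vadd (vopp x) x = vzero ;
  scal_one : forall x : bnvs, vscal C1 x = x ;
  scal_assoc : forall (a b : C) (x : bnvs), vscal a (vscal b x) = vscal (Cmul a b) x ;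
  scal_distr_v : forall (a : C) (x y : bnvs), vscal a (vadd x y) = vadd (vscal a x) (vscal a y) ;
  scal_distr_s : forall (a b : C) (x : bnvs), vscal (Cadd a b) x = vadd (vscal a x) (vscal b x) ;
  norm_eq0 : forall x : bnvs, vnorm x = 0 -> x = vzero ;
  norm_scal : forall (a : C) (x : bnvs), vnorm (vscal a x) = Cabs a * vnorm x ;
  norm_triangle : forall x y : bnvs, vnorm (vadd x y) <= vnorm x + vnorm y ;
  complete : forall u : nat -> bnvs, cauchy u -> exists l, conv u l }.

Definition dsum (A B : NVS) : NVS :=
  @mkNVS (A * B)
    (vzero, vzero)
    (fun p q => (vadd (fst p) (fst q), vadd (snd p) (snd q)))
    (fun p => (vopp (fst p), vopp (snd p)))
    (fun c p => (vscal c (fst p), vscal c (snd p)))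
    (fun p => sqrt (vnorm (fst p) ^ 2 + vnorm (snd p) ^ 2)).

Definition linear {A B : NVS} (f : A -> B) : Prop :=
  (forall x y, f (vadd x y) = vadd (f x) (f y)) /\
  (forall c x, f (vscal c x) = vscal c (f x)).

Definition bounded_op {A B : NVS} (f : A -> B) : Prop :=
  linear f /\ exists K, forall x, vnorm (f x) <= K * vnorm x.

Definition invertible {A B : NVS} (f : A -> B) : Prop :=
  bounded_op f /\ exists g : B -> A, bounded_op g /\
    (forall x, g (f x) = x) /\ (forall y, f (g y) = y).

Definition diag_id {A A' : NVS} (T : A -> A) : dsum A A' -> dsum A A' :=
  fun p => (T (fst p), snd p).

Definition equiv_after_ext (X Y : Banach) (T : X -> X) (S : Y -> Y) : Prop :=
  exists (X' Y' : Banach) (E : dsum Y Y' -> dsum X X') (F : dsum X X' -> dsum Y Y'),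
    invertible E /\ invertible F /\
    forall p : dsum X X', @diag_id X X' T p = E (@diag_id Y Y' S (F p)).

(* compact operator: image of every bounded sequence has a convergent
   subsequence (i.e. the image of the unit ball is relatively compact) *)
Definition compact_op {A B : NVS} (f : A -> B) : Prop :=
  bounded_op f /\
  forall u : nat -> A, (exists K, forall n, vnorm (u n) <= K) ->
    exists (phi : nat -> nat) (l : B),
      (forall n, (phi n < phi (S n))%nat) /\ conv (fun n => f (u (phi n))) l.

Definition closed_subspace {V : NVS} (M : V -> Prop) : Prop :=
  M vzero /\
  (forall x y, M x -> M y -> M (vadd x y)) /\
  (forall c x, M x -> M (vscal c x)) /\
  (forall (u : nat -> V) l, (forall n, M (u n)) -> conv u l -> M l).

Fixpoint lin_comb {V : NVS} (n : nat) (c : nat -> C) (e : nat -> V) : V :=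
  match n with
  | O => vzero
  | S k => vadd (lin_comb k c e) (vscal (c k) (e k))
  end.

(* finite codimension: V / M is finite dimensional, i.e. finitely many
   vectors span V modulo M *)
Definition finite_codim {V : NVS} (M : V -> Prop) : Prop :=
  exists (n : nat) (e : nat -> V), forall y : V,
    exists (c : nat -> C) (m : V), M m /\ y = vadd m (lin_comb n c e).

Definition topo_iso {A B : NVS} (M : A -> Prop) (N : B -> Prop) : Prop :=
  exists (f : A -> B) (g : B -> A),
    (forall x, M x -> N (f x)) /\ (forall y, N y -> M (g y)) /\
    (forall x, M x -> g (f x) = x) /\ (forall y, N y -> f (g y) = y) /\
    (forall x y, M x -> M y -> f (vadd x y) = vadd (f x) (f y)) /\
    (forall c x, M x -> f (vscal c x) = vscal c (f x)) /\
    (exists K, forall x, M x -> vnorm (f x) <= K * vnorm x) /\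
    (exists K, forall y, N y -> vnorm (g y) <= K * vnorm y).

(* Main.v *)
From Stdlib Require Import Reals Lra Lia ClassicalEpsilon Classical.
Require Import Defs.
Open Scope R_scope.
Arguments add_assoc {b0} x y z.
Arguments add_comm {b0} x y.
Arguments add_zero {b0} x.
Arguments add_opp {b0} x.
Arguments scal_one {b0} x.
Arguments scal_assoc {b0} a b x.
Arguments scal_distr_v {b0} a x y.
Arguments scal_distr_s {b0} a b x.
Arguments norm_eq0 {b0} x.
Arguments norm_scal {b0} a x.
Arguments norm_triangle {b0} x y.
Arguments complete {b0} u.

Definition rs (r : R) : C := mkC r 0.

Lemma Cabs_rs r : Cabs (rs r) = Rabs r.
Proof. unfold Cabs, rs; simpl. rewrite <- sqrt_Rsqr_abs. f_equal. unfold Rsqr; ring. Qed.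
Lemma Cmul_rs a b : Cmul (rs a) (rs b) = rs (a*b).
Proof. unfold Cmul, rs; simpl. f_equal; ring. Qed.
Lemma Cadd_rs a b : Cadd (rs a) (rs b) = rs (a+b).
Proof. unfold Cadd, rs; simpl. f_equal; ring. Qed.
Lemma C1_rs : C1 = rs 1. Proof. reflexivity. Qed.
Lemma Cabs_ge0 c : 0 <= Cabs c. Proof. apply sqrt_pos. Qed.


Lemma vadd_0_r {V : Banach} (x : V) : vadd x vzero = x.
Proof. rewrite add_comm. apply add_zero. Qed.
Lemma opp_r {V : Banach} (x : V) : vadd x (vopp x) = vzero.
Proof. rewrite add_comm. apply add_opp. Qed.
Lemma vadd_cancel_l {V : Banach} (x y z : V) : vadd x y = vadd x z -> y = z.
Proof. intro H. rewrite <- (add_zero y), <- (add_zero z), <- (add_opp x), <- !add_assoc, H. reflexivity. Qed.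
Lemma vadd_cancel_r {V : Banach} (x y z : V) : vadd y x = vadd z x -> y = z.
Proof. rewrite (add_comm y), (add_comm z). apply vadd_cancel_l. Qed.
Lemma scal0 {V : Banach} (x : V) : vscal (rs 0) x = vzero.
Proof. apply (vadd_cancel_l (vscal (rs 0) x)). rewrite vadd_0_r, <- scal_distr_s, Cadd_rs, Rplus_0_r. reflexivity. Qed.
Lemma scal_v0 {V : Banach} c : vscal c (@vzero V) = vzero.
Proof. apply (vadd_cancel_l (vscal c vzero)). rewrite vadd_0_r, <- scal_distr_v, add_zero. reflexivity. Qed.
Lemma opp_scal {V : Banach} (x : V) : vopp x = vscal (rs (-1)) x.
Proof. apply (vadd_cancel_l x). rewrite opp_r. rewrite <- (scal_one x) at 1. rewrite C1_rs, <- scal_distr_s, Cadd_rs.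
  replace (1 + -1) with 0 by ring. rewrite scal0. reflexivity. Qed.
Lemma norm0 {V : Banach} : vnorm (@vzero V) = 0.
Proof. rewrite <- (scal0 (@vzero V)), norm_scal, Cabs_rs, Rabs_R0. ring. Qed.
Lemma norm_opp {V : Banach} (x : V) : vnorm (vopp x) = vnorm x.
Proof. rewrite opp_scal, norm_scal, Cabs_rs. replace (Rabs (-1)) with 1. ring. rewrite Rabs_left; lra. Qed.
Lemma norm_ge0 {V : Banach} (x : V) : 0 <= vnorm x.
Proof. pose proof (norm_triangle x (vopp x)). rewrite opp_r, norm0, norm_opp in H. lra. Qed.
Lemma opp_opp {V : Banach} (x : V) : vopp (vopp x) = x.
Proof. apply (vadd_cancel_l (vopp x)). rewrite opp_r, add_opp. reflexivity. Qed.
Lemma opp_add {V : Banach} (x y : V) : vopp (vadd x y) = vadd (vopp x) (vopp y).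
Proof. rewrite !opp_scal, scal_distr_v. reflexivity. Qed.
Lemma opp0 {V : Banach} : vopp (@vzero V) = vzero.
Proof. rewrite opp_scal. apply scal_v0. Qed.
Lemma scal_opp {V : Banach} c (x : V) : vscal c (vopp x) = vopp (vscal c x).
Proof. apply (vadd_cancel_l (vscal c x)). rewrite opp_r, <- scal_distr_v, opp_r, scal_v0. reflexivity. Qed.
Lemma vsub_diag {V : Banach} (x : V) : vsub x x = vzero.
Proof. apply opp_r. Qed.
Lemma vsub_0_r {V : Banach} (x : V) : vsub x vzero = x.
Proof. unfold vsub. rewrite opp0. apply vadd_0_r. Qed.
Lemma vsub_eq0 {V : Banach} (x y : V) : vsub x y = vzero -> x = y.
Proof. unfold vsub; intro H. apply (vadd_cancel_r (vopp y)). rewrite H, opp_r. reflexivity. Qed.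
Lemma vsub_swap {V : Banach} (x y : V) : vsub y x = vopp (vsub x y).
Proof. unfold vsub. rewrite opp_add, opp_opp, add_comm. reflexivity. Qed.
Lemma norm_sub_sym {V : Banach} (x y : V) : vnorm (vsub x y) = vnorm (vsub y x).
Proof. rewrite (vsub_swap x y), norm_opp. reflexivity. Qed.
Lemma vsub_add {V : Banach} (x y z : V) : vsub x z = vadd (vsub x y) (vsub y z).
Proof. unfold vsub. rewrite <- add_assoc, (add_assoc (vopp y)), add_opp, add_zero. reflexivity. Qed.
Lemma norm_sub_tri {V : Banach} (x y z : V) : vnorm (vsub x z) <= vnorm (vsub x y) + vnorm (vsub y z).
Proof. rewrite (vsub_add x y z). apply norm_triangle. Qed.
Lemma scal_sub {V : Banach} c (x y : V) : vscal c (vsub x y) = vsub (vscal c x) (vscal c y).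
Proof. unfold vsub. rewrite scal_distr_v, scal_opp. reflexivity. Qed.
Lemma scal_rs_sub {V : Banach} a b (x : V) : vsub (vscal (rs a) x) (vscal (rs b) x) = vscal (rs (a-b)) x.
Proof. unfold vsub. rewrite opp_scal, scal_assoc, Cmul_rs, <- scal_distr_s, Cadd_rs. f_equal; f_equal; ring. Qed.
Lemma scal_rs_rs {V : Banach} a b (x : V) : vscal (rs a) (vscal (rs b) x) = vscal (rs (a*b)) x.
Proof. rewrite scal_assoc, Cmul_rs. reflexivity. Qed.
Lemma scal1 {V : Banach} (x : V) : vscal (rs 1) x = x.
Proof. rewrite <- C1_rs. apply scal_one. Qed.
Lemma norm_scal_rs {V : Banach} a (x : V) : vnorm (vscal (rs a) x) = Rabs a * vnorm x.
Proof. rewrite norm_scal, Cabs_rs. reflexivity. Qed.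
Lemma norm_eq0_iff {V : Banach} (x : V) : vnorm x = 0 <-> x = vzero.
Proof. split. apply norm_eq0. intros ->; apply norm0. Qed.
Lemma vsub_add_cancel {V : Banach} (x y : V) : vadd (vsub x y) y = x.
Proof. unfold vsub. rewrite <- add_assoc, add_opp, vadd_0_r. reflexivity. Qed.
Lemma vadd_sub_cancel {V : Banach} (x y : V) : vsub (vadd x y) y = x.
Proof. unfold vsub. rewrite <- add_assoc, opp_r, vadd_0_r. reflexivity. Qed.
Lemma vadd_sub_cancel_l {V : Banach} (x y : V) : vsub (vadd x y) x = y.
Proof. rewrite add_comm. apply vadd_sub_cancel. Qed.
Lemma vsub_sub_r {V : Banach} (x y : V) : vsub x (vsub x y) = y.
Proof. unfold vsub. rewrite opp_add, opp_opp, add_assoc, opp_r, add_zero. reflexivity. Qed.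
Lemma vsub_vadd_r {V : Banach} (x y z : V) : vsub x (vadd y z) = vsub (vsub x y) z.
Proof. unfold vsub. rewrite opp_add, add_assoc. reflexivity. Qed.
Lemma vadd_vsub_assoc {V : Banach} (x y z : V) : vadd x (vsub y z) = vsub (vadd x y) z.
Proof. unfold vsub. apply add_assoc. Qed.
Lemma vsub_vsub_r {V : Banach} (x y z : V) : vsub x (vsub y z) = vadd (vsub x y) z.
Proof. unfold vsub. rewrite opp_add, opp_opp, add_assoc. reflexivity. Qed.
Open Scope R_scope.

Lemma lin0 {A B : Banach} (f : A -> B) : linear f -> f vzero = vzero.
Proof. intros [Ha _]. apply (vadd_cancel_l (f vzero)). rewrite <- Ha, !vadd_0_r. reflexivity. Qed.
Lemma lin_opp {A B : Banach} (f : A -> B) x : linear f -> f (vopp x) = vopp (f x).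
Proof. intros H. rewrite !opp_scal. apply (proj2 H). Qed.
Lemma lin_sub {A B : Banach} (f : A -> B) x y : linear f -> f (vsub x y) = vsub (f x) (f y).
Proof. intros H. unfold vsub. rewrite (proj1 H), lin_opp; auto. Qed.
Lemma lin_add {A B : Banach} (f : A -> B) x y : linear f -> f (vadd x y) = vadd (f x) (f y).
Proof. intros H; apply (proj1 H). Qed.
Lemma lin_scal {A B : Banach} (f : A -> B) c x : linear f -> f (vscal c x) = vscal c (f x).
Proof. intros H; apply (proj2 H). Qed.

Lemma bounded_pos {A B : Banach} (f : A -> B) : bounded_op f ->
  exists K, 0 < K /\ forall x, vnorm (f x) <= K * vnorm x.
Proof. intros [_ [K HK]]. exists (Rabs K + 1). split. pose proof (Rabs_pos K); lra.
  intros x. specialize (HK x). pose proof (norm_ge0 x).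
  assert (K <= Rabs K + 1) by (pose proof (Rle_abs K); lra). nra. Qed.

Lemma conv_unique {V : Banach} (u : nat -> V) l1 l2 : conv u l1 -> conv u l2 -> l1 = l2.
Proof. intros H1 H2. apply vsub_eq0, norm_eq0.
  destruct (Rle_lt_dec (vnorm (vsub l1 l2)) 0) as [Hle|Hlt].
  pose proof (norm_ge0 (vsub l1 l2)); lra. exfalso.
  destruct (H1 (vnorm (vsub l1 l2)/2)) as [N1 HN1]. lra. destruct (H2 (vnorm (vsub l1 l2)/2)) as [N2 HN2]. lra.
  specialize (HN1 (N1+N2)%nat ltac:(lia)). specialize (HN2 (N1+N2)%nat ltac:(lia)).
  pose proof (norm_sub_tri l1 (u (N1+N2)%nat) l2). rewrite (norm_sub_sym l1 (u _)) in H. lra. Qed.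

Lemma conv_const {V : Banach} (l : V) : conv (fun _ => l) l.
Proof. intros e He. exists O. intros. rewrite vsub_diag, norm0. lra. Qed.

Lemma conv_ext {V : Banach} (u v : nat -> V) l : (forall n, u n = v n) -> conv u l -> conv v l.
Proof. intros E H e He. destruct (H e He) as [N HN]. exists N. intros. rewrite <- E. auto. Qed.

Lemma vsub_addadd {V : Banach} (a b c d : V) : vsub (vadd a b) (vadd c d) = vadd (vsub a c) (vsub b d).
Proof. unfold vsub. rewrite opp_add. rewrite <- !add_assoc. f_equal. rewrite (add_comm b), <- !add_assoc. f_equal. apply add_comm. Qed.

Lemma conv_add {V : Banach} (u v : nat -> V) l m : conv u l -> conv v m -> conv (fun n => vadd (u n) (v n)) (vadd l m).
Proof. intros H1 H2 e He. destruct (H1 (e/2)) as [N1 HN1]. lra. destruct (H2 (e/2)) as [N2 HN2]. lra.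
  exists (N1+N2)%nat. intros n Hn. rewrite vsub_addadd. eapply Rle_lt_trans. apply norm_triangle.
  specialize (HN1 n ltac:(lia)). specialize (HN2 n ltac:(lia)). lra. Qed.

Lemma conv_lin {A B : Banach} (f : A -> B) (u : nat -> A) l : bounded_op f -> conv u l -> conv (fun n => f (u n)) (f l).
Proof. intros Hf H e He. destruct (bounded_pos f Hf) as [K [HK HKb]].
  destruct (H (e/K)) as [N HN]. apply Rdiv_lt_0_compat; lra. exists N. intros n Hn.
  rewrite <- lin_sub by (apply Hf). eapply Rle_lt_trans. apply HKb.
  specialize (HN n Hn). apply (Rmult_lt_compat_l K) in HN; auto. replace (K * (e/K)) with e in HN by (field; lra). lra. Qed.

Lemma conv_sub {V : Banach} (u v : nat -> V) l m : conv u l -> conv v m -> conv (fun n => vsub (u n) (v n)) (vsub l m).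
Proof. intros H1 H2. unfold vsub. apply conv_add; auto.
  apply (conv_lin (@vopp V)). split. split. intros; apply opp_add. intros; symmetry; apply scal_opp.
  exists 1. intros; rewrite norm_opp; lra. auto. Qed.

Lemma conv_scal {V : Banach} (u : nat -> V) l c : conv u l -> conv (fun n => vscal c (u n)) (vscal c l).
Proof. intros H. apply (conv_lin (vscal c)). split. split. intros; apply scal_distr_v.
  intros. rewrite !scal_assoc. unfold Cmul. f_equal. f_equal; ring.
  exists (Cabs c). intros. rewrite norm_scal. lra. auto. Qed.

Lemma conv_0 {V : Banach} (u : nat -> V) : conv u vzero <-> forall e, e > 0 -> exists N, forall n, (n >= N)%nat -> vnorm (u n) < e.
Proof. unfold conv. split; intros H e He; destruct (H e He) as [N HN]; exists N; intros n Hn; specialize (HN n Hn);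
  rewrite ?vsub_0_r in *; auto. Qed.

Lemma conv_sub0 {V : Banach} (u : nat -> V) l : conv u l <-> conv (fun n => vsub (u n) l) vzero.
Proof. unfold conv. split; intros H e He; destruct (H e He) as [N HN]; exists N; intros n Hn; specialize (HN n Hn);
  rewrite ?vsub_0_r in *; auto. Qed.

Definition incr (phi : nat -> nat) := forall n, (phi n < phi (S n))%nat.
Lemma incr_ge (phi : nat -> nat) : incr phi -> forall n, (n <= phi n)%nat.
Proof. intros H n; induction n. lia. specialize (H n). lia. Qed.
Lemma incr_lt (phi : nat -> nat) : incr phi -> forall m n, (m < n)%nat -> (phi m < phi n)%nat.
Proof. intros H m n Hmn. induction Hmn. apply H. specialize (H m0). lia. Qed.
Lemma incr_comp phi psi : incr phi -> incr psi -> incr (fun n => phi (psi n)).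
Proof. intros H1 H2 n. apply incr_lt; auto. Qed.

Lemma conv_subseq {V : Banach} (u : nat -> V) l phi : incr phi -> conv u l -> conv (fun n => u (phi n)) l.
Proof. intros Hp H e He. destruct (H e He) as [N HN]. exists N. intros. apply HN.
  pose proof (incr_ge phi Hp n). lia. Qed.

Lemma conv_bounded {V : Banach} (u : nat -> V) l : conv u l -> exists B, forall n, vnorm (u n) <= B.
Proof. intros H. destruct (H 1) as [N HN]. lra.
  assert (forall k, exists B, forall n, (n < k)%nat -> vnorm (u n) <= B).
  { induction k. exists 0. intros; lia. destruct IHk as [B HB]. exists (Rmax B (vnorm (u k))). intros.
    destruct (Nat.eq_dec n k). subst. apply Rmax_r. eapply Rle_trans. apply HB; lia. apply Rmax_l. }
  destruct (H0 N) as [B HB]. exists (Rmax B (vnorm l + 1)). intros n.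
  destruct (Nat.lt_ge_cases n N). eapply Rle_trans. apply HB; auto. apply Rmax_l.
  eapply Rle_trans. 2: apply Rmax_r. specialize (HN n H1).
  pose proof (norm_triangle (vsub (u n) l) l). rewrite vsub_add_cancel in H2. lra. Qed.

Lemma norm_rev_tri {V : Banach} (x y : V) : Rabs (vnorm x - vnorm y) <= vnorm (vsub x y).
Proof. pose proof (norm_triangle (vsub x y) y). rewrite vsub_add_cancel in H.
  pose proof (norm_triangle (vsub y x) x). rewrite vsub_add_cancel in H0. rewrite norm_sub_sym in H0.
  apply Rabs_le. lra. Qed.

Lemma conv_norm_le {V : Banach} (u : nat -> V) l B : conv u l -> (forall n, vnorm (u n) <= B) -> vnorm l <= B.
Proof. intros H HB. destruct (Rle_lt_dec (vnorm l) B); auto. exfalso.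
  destruct (H (vnorm l - B)) as [N HN]. lra. specialize (HN N (le_n _)). specialize (HB N).
  pose proof (norm_rev_tri (u N) l). rewrite Rabs_minus_sym in H0. pose proof (Rle_abs (vnorm l - vnorm (u N))). lra. Qed.

Lemma conv_norm_ge {V : Banach} (u : nat -> V) l B : conv u l -> (forall n, B <= vnorm (u n)) -> B <= vnorm l.
Proof. intros H HB. destruct (Rle_lt_dec B (vnorm l)); auto. exfalso.
  destruct (H (B - vnorm l)) as [N HN]. lra. specialize (HN N (le_n _)). specialize (HB N).
  pose proof (norm_rev_tri (u N) l). pose proof (Rle_abs (vnorm (u N) - vnorm l)). lra. Qed.

Lemma conv_cauchy {V : Banach} (u : nat -> V) l : conv u l -> cauchy u.
Proof. intros H e He. destruct (H (e/2)) as [N HN]. lra. exists N. intros m n Hm Hn.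
  pose proof (norm_sub_tri (u m) l (u n)). rewrite (norm_sub_sym l) in H0.
  pose proof (HN m Hm). pose proof (HN n Hn). lra. Qed.
Open Scope R_scope.

Lemma bounded_add {A B : Banach} (f g : A -> B) : bounded_op f -> bounded_op g -> bounded_op (fun x => vadd (f x) (g x)).
Proof. intros Hf Hg. destruct (bounded_pos f Hf) as [K1 [_ H1]]. destruct (bounded_pos g Hg) as [K2 [_ H2]].
  split. split.
  - intros. rewrite (lin_add f), (lin_add g) by (apply Hf || apply Hg). 
    rewrite <- !add_assoc. f_equal. rewrite !add_assoc. f_equal. apply add_comm.
  - intros. rewrite (lin_scal f), (lin_scal g) by (apply Hf || apply Hg). symmetry; apply scal_distr_v.
  - exists (K1 + K2). intros. eapply Rle_trans. apply norm_triangle. specialize (H1 x); specialize (H2 x). lra. Qed.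

Lemma bounded_comp {A B D : Banach} (f : B -> D) (g : A -> B) : bounded_op f -> bounded_op g -> bounded_op (fun x => f (g x)).
Proof. intros Hf Hg. destruct (bounded_pos f Hf) as [K1 [P1 H1]]. destruct (bounded_pos g Hg) as [K2 [_ H2]].
  split. split.
  - intros. rewrite (lin_add g), (lin_add f) by (apply Hf || apply Hg). auto.
  - intros. rewrite (lin_scal g), (lin_scal f) by (apply Hf || apply Hg). auto.
  - exists (K1 * K2). intros. eapply Rle_trans. apply H1. specialize (H2 x). rewrite Rmult_assoc. apply Rmult_le_compat_l; lra. Qed.

Lemma bounded_id {A : Banach} : bounded_op (fun x : A => x).
Proof. split. split; auto. exists 1. intros; lra. Qed.

Lemma bounded_sub {A B : Banach} (f g : A -> B) : bounded_op f -> bounded_op g -> bounded_op (fun x => vsub (f x) (g x)).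
Proof. intros Hf Hg. unfold vsub. apply (bounded_add f (fun x => vopp (g x))); auto.
  apply (bounded_comp (@vopp B) g); auto. split. split. intros; apply opp_add. intros; symmetry; apply scal_opp.
  exists 1. intros; rewrite norm_opp; lra. Qed.

Lemma compact_lin {A B : Banach} (K : A -> B) : compact_op K -> linear K.
Proof. intros [[H _] _]; auto. Qed.
Lemma compact_bnd {A B : Banach} (K : A -> B) : compact_op K -> bounded_op K.
Proof. intros [H _]; auto. Qed.

Lemma compact_add {A B : Banach} (f g : A -> B) : compact_op f -> compact_op g -> compact_op (fun x => vadd (f x) (g x)).
Proof. intros Hf Hg. split. apply bounded_add; apply compact_bnd; auto.
  intros u Hu. destruct (proj2 Hf u Hu) as [phi [l [Hp Hl]]].
  destruct (proj2 Hg (fun n => u (phi n))) as [psi [m [Hq Hm]]].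
  { destruct Hu as [Bd HB]. exists Bd. auto. }
  exists (fun n => phi (psi n)), (vadd l m). split. apply incr_comp; auto.
  apply (conv_add (fun n => f (u (phi (psi n)))) (fun n => g (u (phi (psi n))))); auto.
  apply (conv_subseq (fun n => f (u (phi n)))); auto. Qed.

Lemma compact_comp_r {A B D : Banach} (K : B -> D) (L : A -> B) : compact_op K -> bounded_op L -> compact_op (fun x => K (L x)).
Proof. intros HK HL. split. apply bounded_comp; auto. apply compact_bnd; auto.
  intros u [Bd HB]. destruct (bounded_pos L HL) as [c [Pc Hc]].
  destruct (proj2 HK (fun n => L (u n))) as [phi [l [Hp Hl]]].
  exists (c * Bd). intros. eapply Rle_trans. apply Hc. apply Rmult_le_compat_l; [lra | apply HB].
  exists phi, l. auto. Qed.

Lemma compact_comp_l {A B D : Banach} (L : B -> D) (K : A -> B) : bounded_op L -> compact_op K -> compact_op (fun x => L (K x)).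
Proof. intros HL HK. split. apply bounded_comp; auto. apply compact_bnd; auto.
  intros u Hu. destruct (proj2 HK u Hu) as [phi [l [Hp Hl]]].
  exists phi, (L l). split; auto. apply (conv_lin L (fun n => K (u (phi n)))); auto. Qed.

Lemma compact_zero {A B : Banach} : compact_op (fun _ : A => @vzero B).
Proof. split. split. split. intros; rewrite vadd_0_r; auto. intros; rewrite scal_v0; auto.
  exists 0. intros; rewrite norm0; lra.
  intros u _. exists (fun n => n), vzero. split. intro; lia. apply conv_const. Qed.

Lemma sep_false {A B : Banach} (K : A -> B) (u : nat -> A) : compact_op K ->
  (forall n, vnorm (u n) <= 1) ->
  (forall m n, (m < n)%nat -> 1/2 <= vnorm (vsub (K (u m)) (K (u n)))) -> False.
Proof. intros HK Hu Hs. destruct (proj2 HK u) as [phi [l [Hp Hl]]]. exists 1; auto.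
  destruct (conv_cauchy _ _ Hl (1/2)) as [N HN]. lra.
  specialize (HN N (S N) (le_n _) (le_S _ _ (le_n _))). specialize (Hs (phi N) (phi (S N)) (Hp N)). lra. Qed.

Lemma approx_kernel {V : Banach} (K : V -> V) (u : nat -> V) : compact_op K ->
  (exists B, forall n, vnorm (u n) <= B) ->
  conv (fun n => vsub (u n) (K (u n))) vzero ->
  exists phi v, incr phi /\ conv (fun n => u (phi n)) v /\ vsub v (K v) = vzero.
Proof. intros HK Hu H0. destruct (proj2 HK u Hu) as [phi [l [Hp Hl]]].
  assert (Hc : conv (fun n => u (phi n)) l).
  { apply (conv_ext (fun n => vadd (vsub (u (phi n)) (K (u (phi n)))) (K (u (phi n))))).
    intros; apply vsub_add_cancel. rewrite <- (add_zero l). apply conv_add; auto.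
    apply (conv_subseq (fun n => vsub (u n) (K (u n)))); auto. }
  exists phi, l. split; auto. split; auto.
  pose proof (conv_lin K _ _ (compact_bnd K HK) Hc). simpl in H.
  pose proof (conv_unique _ _ _ H Hl). rewrite H1. apply vsub_diag. Qed.
Open Scope R_scope.

Lemma choice_fun {A B : Type} (P : A -> B -> Prop) : (forall a, exists b, P a b) -> exists f : A -> B, forall a, P a (f a).
Proof. intros H. exists (fun a => proj1_sig (constructive_indefinite_description _ (H a))).
  intros a. apply (proj2_sig (constructive_indefinite_description _ (H a))). Qed.

Lemma small_inv eps : eps > 0 -> exists N, forall n, (n >= N)%nat -> / INR (S n) < eps.
Proof. intros He. destruct (archimed_cor1 eps He) as [N [HN PN]]. exists N. intros n Hn.
  eapply Rle_lt_trans. 2: apply HN. apply Rinv_le_contravar. apply lt_0_INR; auto. apply le_INR; lia. Qed.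

Lemma inv_S_pos n : 0 < / INR (S n).
Proof. apply Rinv_0_lt_compat. apply lt_0_INR; lia. Qed.

Lemma conv_of_bound {V : Banach} (u : nat -> V) l : (forall n, vnorm (vsub (u n) l) <= / INR (S n)) -> conv u l.
Proof. intros H e He. destruct (small_inv e He) as [N HN]. exists N. intros n Hn.
  eapply Rle_lt_trans. apply H. auto. Qed.

Lemma closed_sep {V : Banach} (Z : V -> Prop) x : closed_subspace Z -> ~ Z x ->
  exists d, 0 < d /\ forall z, Z z -> d <= vnorm (vsub x z).
Proof. intros HZ Hx. apply NNPP. intro Hn. apply Hx.
  assert (forall n, exists z, Z z /\ vnorm (vsub z x) <= / INR (S n)).
  { intros n. apply NNPP. intro Hm. apply Hn. exists (/ INR (S n)). split. apply inv_S_pos.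
    intros z Hz. destruct (Rle_lt_dec (/ INR (S n)) (vnorm (vsub x z))); auto. exfalso. apply Hm. exists z.
    split; auto. rewrite norm_sub_sym. lra. }
  apply choice_fun in H. destruct H as [f Hf]. destruct HZ as [_ [_ [_ Hcl]]].
  apply (Hcl f). intros; apply Hf. apply conv_of_bound. intros; apply Hf. Qed.

Lemma riesz_lemma {V : Banach} (Z : V -> Prop) x : closed_subspace Z -> ~ Z x ->
  exists z0, Z z0 /\ 0 < vnorm (vsub x z0) /\
    forall z, Z z -> 1/2 <= vnorm (vsub (vscal (rs (/ vnorm (vsub x z0))) (vsub x z0)) z).
Proof. intros HZ Hx. destruct (closed_sep Z x HZ Hx) as [de [Pde Hde]].
  set (E := fun r => forall z, Z z -> r <= vnorm (vsub x z)).
  assert (Hb : bound E). { exists (vnorm x). intros r Hr. pose proof (Hr vzero (proj1 HZ)). rewrite vsub_0_r in H. auto. }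
  destruct (completeness E Hb (ex_intro _ de Hde)) as [d [Hub Hlub]].
  assert (Hd1 : de <= d) by (apply Hub; exact Hde).
  assert (Hd2 : forall z, Z z -> d <= vnorm (vsub x z)). { intros z Hz. apply Hlub. intros r Hr. apply Hr; auto. }
  assert (Hz0 : exists z0, Z z0 /\ vnorm (vsub x z0) < 2 * d).
  { apply NNPP. intro Hn. assert (E (2*d)). { intros z Hz. destruct (Rle_lt_dec (2*d) (vnorm (vsub x z))); auto.
      exfalso; apply Hn; exists z; auto. } apply Hub in H. lra. }
  destruct Hz0 as [z0 [Hz0 Ht]]. pose proof (Hd2 z0 Hz0) as Ht2. exists z0. split; auto. split. lra.
  intros z Hz. set (t := vnorm (vsub x z0)) in *.
  assert (Heq : vsub (vscal (rs (/ t)) (vsub x z0)) z = vscal (rs (/ t)) (vsub x (vadd z0 (vscal (rs t) z)))).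
  { rewrite vsub_vadd_r, (scal_sub _ (vsub x z0)), scal_rs_rs. replace (/t * t) with 1 by (field; lra). rewrite scal1. auto. }
  rewrite Heq, norm_scal_rs. rewrite Rabs_right by (left; apply Rinv_0_lt_compat; lra).
  assert (Zw : Z (vadd z0 (vscal (rs t) z))). { destruct HZ as [_ [Ha [Hs _]]]. apply Ha; auto. }
  pose proof (Hd2 _ Zw). apply (Rmult_le_reg_l t). lra. rewrite <- Rmult_assoc, Rinv_r by lra. lra. Qed.
Open Scope R_scope.

Definition Wf {V : Banach} (K : V -> V) (x : V) : V := vsub x (K x).

Lemma W_bnd {V : Banach} (K : V -> V) : compact_op K -> bounded_op (Wf K).
Proof. intros HK. apply (bounded_sub (fun x => x) K). apply bounded_id. apply compact_bnd; auto. Qed.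
Lemma W_lin {V : Banach} (K : V -> V) : compact_op K -> linear (Wf K).
Proof. intros HK. apply W_bnd; auto. Qed.

Lemma ker_closed {A B : Banach} (f : A -> B) : bounded_op f -> closed_subspace (fun x => f x = vzero).
Proof. intros Hf. split. apply lin0, Hf. split. intros. rewrite lin_add by apply Hf. rewrite H, H0; apply add_zero.
  split. intros. rewrite lin_scal by apply Hf. rewrite H. apply scal_v0.
  intros u l Hu Hl. pose proof (conv_lin f u l Hf Hl). eapply conv_unique. apply H.
  apply (conv_ext (fun _ => vzero)). intros; rewrite Hu; auto. apply conv_const. Qed.

Lemma norm_normalize {V : Banach} (x : V) : 0 < vnorm x -> vnorm (vscal (rs (/ vnorm x)) x) = 1.
Proof. intros H. rewrite norm_scal_rs, Rabs_right. field; lra. left; apply Rinv_0_lt_compat; auto. Qed.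

Lemma W_bound {V : Banach} (K : V -> V) : compact_op K ->
  exists c, forall x, exists z, Wf K z = vzero /\ vnorm (vsub x z) <= c * vnorm (Wf K x).
Proof. intros HK. pose proof (W_bnd K HK) as HW. apply NNPP. intro Hn.
  assert (H : forall n, exists u, vnorm u <= 1 /\ vnorm (Wf K u) <= / INR (S n) /\
     forall z, Wf K z = vzero -> 1/2 <= vnorm (vsub u z)).
  { intros n. assert (exists x, forall z, Wf K z = vzero -> INR (S n) * vnorm (Wf K x) < vnorm (vsub x z)).
    { apply NNPP; intro Hm. apply Hn. exists (INR (S n)). intros x. apply NNPP; intro Hk. apply Hm. exists x.
      intros z Hz. destruct (Rle_lt_dec (vnorm (vsub x z)) (INR (S n) * vnorm (Wf K x))); auto.
      exfalso; apply Hk; exists z; auto. }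
    destruct H as [x Hx]. assert (Hnx : ~ Wf K x = vzero).
    { intro E. specialize (Hx x E). rewrite vsub_diag, norm0, E, norm0 in Hx. lra. }
    destruct (riesz_lemma _ x (ker_closed _ HW) Hnx) as [z0 [Hz0 [Pt Hr]]].
    exists (vscal (rs (/ vnorm (vsub x z0))) (vsub x z0)). split. rewrite norm_normalize; lra. split.
    - rewrite lin_scal, lin_sub, Hz0, vsub_0_r, norm_scal_rs by apply HW.
      rewrite Rabs_right by (left; apply Rinv_0_lt_compat; auto). specialize (Hx z0 Hz0).
      pose proof (lt_0_INR (S n) ltac:(lia)).
      apply (Rmult_le_reg_l (vnorm (vsub x z0) * INR (S n))). nra.
      replace (vnorm (vsub x z0) * INR (S n) * (/ vnorm (vsub x z0) * vnorm (Wf K x))) with (INR (S n) * vnorm (Wf K x)) by (field; lra).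
      replace (vnorm (vsub x z0) * INR (S n) * / INR (S n)) with (vnorm (vsub x z0)) by (field; lra). lra.
    - auto. }
  apply choice_fun in H. destruct H as [u Hu].
  assert (Hb : exists B, forall n, vnorm (u n) <= B) by (exists 1; intro n; apply Hu).
  assert (Hc0 : conv (fun n => vsub (u n) (K (u n))) vzero).
  { apply conv_of_bound. intros; rewrite vsub_0_r; apply Hu. }
  destruct (approx_kernel K u HK Hb Hc0) as [phi [v [Hp [Hc Hv]]]].
  destruct (Hc (1/2)) as [N HN]. lra. specialize (HN N (le_n _)). pose proof (proj2 (proj2 (Hu (phi N))) v Hv). lra. Qed.

Lemma range_closed {V : Banach} (K : V -> V) : compact_op K -> closed_subspace (fun y => exists x, y = Wf K x).
Proof. intros HK. pose proof (W_bnd K HK) as HW. split. exists vzero. rewrite lin0; auto. apply HW.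
  split. intros y1 y2 [x1 ->] [x2 ->]. exists (vadd x1 x2). rewrite lin_add; auto. apply HW.
  split. intros c y [x ->]. exists (vscal c x). rewrite lin_scal; auto. apply HW.
  intros u l Hu Hl. apply choice_fun in Hu. destruct Hu as [x Hx].
  destruct (W_bound K HK) as [c Hc]. assert (Hz := fun n => Hc (x n)). apply choice_fun in Hz. destruct Hz as [z Hz].
  set (w := fun n => vsub (x n) (z n)).
  assert (Ww : forall n, Wf K (w n) = u n). { intros n. unfold w. rewrite lin_sub by apply HW. rewrite (proj1 (Hz n)), vsub_0_r. auto. }
  destruct (conv_bounded u l Hl) as [B HB].
  destruct (proj2 HK w) as [phi [m [Hp Hm]]].
  { exists (Rabs c * B). intros n. unfold w. eapply Rle_trans. apply (proj2 (Hz n)).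
    pose proof (HB n). rewrite Hx in H. pose proof (norm_ge0 (Wf K (x n))). pose proof (Rle_abs c). pose proof (Rabs_pos c). nra. }
  assert (Hcw : conv (fun n => w (phi n)) (vadd l m)).
  { apply (conv_ext (fun n => vadd (Wf K (w (phi n))) (K (w (phi n))))). intros; apply vsub_add_cancel.
    apply conv_add; auto. apply (conv_ext (fun n => u (phi n))). intros; rewrite Ww; auto. apply conv_subseq; auto. }
  exists (vadd l m). eapply conv_unique. apply (conv_subseq u l phi Hp Hl).
  apply (conv_ext (fun n => Wf K (w (phi n)))). intros; apply Ww. apply conv_lin; auto. Qed.
Open Scope R_scope.

Lemma cs_add {V : Banach} (Z : V -> Prop) x y : closed_subspace Z -> Z x -> Z y -> Z (vadd x y).
Proof. intros [_ [H _]]; auto. Qed.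
Lemma cs_scal {V : Banach} (Z : V -> Prop) c x : closed_subspace Z -> Z x -> Z (vscal c x).
Proof. intros [_ [_ [H _]]]; auto. Qed.
Lemma cs_sub {V : Banach} (Z : V -> Prop) x y : closed_subspace Z -> Z x -> Z y -> Z (vsub x y).
Proof. intros HZ Hx Hy. unfold vsub. rewrite opp_scal. apply cs_add; auto. apply cs_scal; auto. Qed.

Lemma KK_id {V : Banach} (K : V -> V) a b : vsub (K a) (K b) = vsub a (vadd (Wf K a) (K b)).
Proof. unfold Wf. rewrite vsub_vadd_r, vsub_sub_r. auto. Qed.
Lemma K_as {V : Banach} (K : V -> V) b : K b = vsub b (Wf K b).
Proof. unfold Wf. rewrite vsub_sub_r. auto. Qed.

Lemma riesz_in {V : Banach} (Z Z' : V -> Prop) x : closed_subspace Z -> closed_subspace Z' ->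
  (forall y, Z y -> Z' y) -> Z' x -> ~ Z x ->
  exists u, Z' u /\ vnorm u <= 1 /\ forall z, Z z -> 1/2 <= vnorm (vsub u z).
Proof. intros HZ HZ' Hs Hx Hn. destruct (riesz_lemma Z x HZ Hn) as [z0 [Hz0 [Pt Hr]]].
  exists (vscal (rs (/ vnorm (vsub x z0))) (vsub x z0)). split. apply cs_scal; auto. apply cs_sub; auto. split. rewrite norm_normalize; lra. apply Hr. Qed.

Lemma chain_incr {V : Banach} (K : V -> V) (Z : nat -> V -> Prop) : compact_op K ->
  (forall n, closed_subspace (Z n)) -> (forall n x, Z n x -> Z (S n) x) ->
  (forall n x, Z (S n) x -> Z n (Wf K x)) -> exists n, forall x, Z (S n) x -> Z n x.
Proof. intros HK HZ Hm HW. apply NNPP. intro Hn.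
  assert (Hmono : forall m n x, (m <= n)%nat -> Z m x -> Z n x). { intros m n x Hle. induction Hle; auto. }
  assert (H : forall n, exists u, Z (S n) u /\ vnorm u <= 1 /\ forall z, Z n z -> 1/2 <= vnorm (vsub u z)).
  { intros n. assert (exists x, Z (S n) x /\ ~ Z n x). { apply NNPP; intro Hk. apply Hn. exists n. intros x Hx.
      apply NNPP; intro; apply Hk; exists x; auto. }
    destruct H as [x [H1 H2]]. apply (riesz_in (Z n) (Z (S n)) x); auto. }
  apply choice_fun in H. destruct H as [u Hu].
  apply (sep_false K u HK). intros; apply Hu. intros m n Hmn.
  rewrite norm_sub_sym, KK_id. apply Hu. apply cs_add; auto. apply HW, Hu. rewrite K_as. apply cs_sub; auto.
  apply (Hmono (S m)); auto. apply Hu. apply (Hmono m). lia. apply HW, Hu. Qed.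

Lemma chain_decr {V : Banach} (K : V -> V) (Z : nat -> V -> Prop) : compact_op K ->
  (forall n, closed_subspace (Z n)) -> (forall n x, Z (S n) x -> Z n x) ->
  (forall n x, Z n x -> Z (S n) (Wf K x)) -> exists n, forall x, Z n x -> Z (S n) x.
Proof. intros HK HZ Hm HW. apply NNPP. intro Hn.
  assert (Hmono : forall m n x, (m <= n)%nat -> Z n x -> Z m x). { intros m n x Hle. induction Hle; auto. }
  assert (H : forall n, exists u, Z n u /\ vnorm u <= 1 /\ forall z, Z (S n) z -> 1/2 <= vnorm (vsub u z)).
  { intros n. assert (exists x, Z n x /\ ~ Z (S n) x). { apply NNPP; intro Hk. apply Hn. exists n. intros x Hx.
      apply NNPP; intro; apply Hk; exists x; auto. }
    destruct H as [x [H1 H2]]. apply (riesz_in (Z (S n)) (Z n) x); auto. }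
  apply choice_fun in H. destruct H as [u Hu].
  apply (sep_false K u HK). intros; apply Hu. intros m n Hmn.
  rewrite KK_id. apply Hu. apply cs_add; auto. apply HW, Hu. rewrite K_as. apply cs_sub; auto.
  apply (Hmono (S m) n). lia. apply Hu. apply (Hmono (S m) (S n)). lia. apply HW, Hu. Qed.
Open Scope R_scope.

Lemma lin_comb_ext {V : Banach} n (c d : nat -> C) (e : nat -> V) :
  (forall i, (i < n)%nat -> c i = d i) -> lin_comb n c e = lin_comb n d e.
Proof. induction n; intros H; simpl; auto. rewrite IHn, H; auto. Qed.

Lemma lin_comb_scal {V : Banach} n k (c : nat -> C) (e : nat -> V) :
  vscal k (lin_comb n c e) = lin_comb n (fun i => Cmul k (c i)) e.
Proof. induction n; simpl. apply scal_v0. rewrite scal_distr_v, IHn, scal_assoc. auto. Qed.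

Lemma lin_comb_delta {V : Banach} n j t (c : nat -> R) (e : nat -> V) : (j < n)%nat ->
  lin_comb n (fun i => rs (c i + if Nat.eqb j i then t else 0)) e =
  vadd (lin_comb n (fun i => rs (c i)) e) (vscal (rs t) (e j)).
Proof. induction n; intros Hj. lia. simpl. destruct (Nat.eq_dec j n).
  - subst. rewrite Nat.eqb_refl. rewrite (lin_comb_ext n _ (fun i => rs (c i))).
    rewrite <- Cadd_rs, scal_distr_s, <- !add_assoc. reflexivity.
    intros i Hi. replace (Nat.eqb n i) with false. f_equal; ring. symmetry; apply Nat.eqb_neq; lia.
  - rewrite IHn by lia. replace (Nat.eqb j n) with false by (symmetry; apply Nat.eqb_neq; auto).
    rewrite Rplus_0_r, <- !add_assoc. f_equal. apply add_comm. Qed.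

Lemma lin_comb_zero {V : Banach} n (e : nat -> V) : lin_comb n (fun _ => rs 0) e = vzero.
Proof. induction n; simpl; auto. rewrite IHn, scal0, add_zero. auto. Qed.

Lemma Un_cv_scal {V : Banach} (a : nat -> R) b (v : V) : Un_cv a b -> conv (fun m => vscal (rs (a m)) v) (vscal (rs b) v).
Proof. intros H eps He. destruct (H (eps / (vnorm v + 1))) as [N HN].
  pose proof (norm_ge0 v). apply Rdiv_lt_0_compat; lra. exists N. intros n Hn.
  rewrite scal_rs_sub, norm_scal_rs. specialize (HN n Hn). unfold R_dist in HN. pose proof (norm_ge0 v).
  pose proof (Rabs_pos (a n - b)).
  apply (Rmult_lt_compat_r (vnorm v + 1)) in HN. 2: lra. replace (eps / (vnorm v + 1) * (vnorm v + 1)) with eps in HN by (field; lra). nra. Qed.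

Lemma lin_comb_conv {V : Banach} n (a : nat -> nat -> R) (b : nat -> R) (e : nat -> V) :
  (forall i, (i < n)%nat -> Un_cv (fun m => a m i) (b i)) ->
  conv (fun m => lin_comb n (fun i => rs (a m i)) e) (lin_comb n (fun i => rs (b i)) e).
Proof. induction n; intros H; simpl. apply conv_const. apply conv_add. apply IHn; auto.
  apply Un_cv_scal. auto. Qed.

Fixpoint seqbuild {V : Type} (ch : nat -> (nat -> V) -> V) (z : V) (j : nat) : nat -> V :=
  match j with
  | O => fun _ => z
  | S j' => fun i => if Nat.ltb i j' then seqbuild ch z j' i else ch j' (seqbuild ch z j')
  end.

Lemma seqbuild_stable {V : Type} ch (z : V) : forall j i, (i < j)%nat -> seqbuild ch z j i = seqbuild ch z (S i) i.
Proof. induction j; intros i Hi. lia. simpl. destruct (Nat.ltb i j) eqn:E.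
  - apply Nat.ltb_lt in E. rewrite IHj by auto. simpl. replace (Nat.ltb i i) with false. auto. symmetry; apply Nat.ltb_ge; lia.
  - apply Nat.ltb_ge in E. assert (i = j) by lia. subst. simpl. rewrite Nat.ltb_irrefl. auto. Qed.

Lemma net_exists {V : Banach} (K : V -> V) (N : V -> Prop) : compact_op K -> closed_subspace N ->
  (forall x, N x -> K x = x) ->
  exists n e, (forall i, (i < n)%nat -> N (e i)) /\
    forall x, N x -> vnorm x <= 1 -> exists i, (i < n)%nat /\ vnorm (vsub x (e i)) <= 1/2.
Proof. intros HK HN HKN. apply NNPP. intro Hn.
  assert (H : forall p : nat * (nat -> V), exists x, (forall i, (i < fst p)%nat -> N (snd p i)) ->
     N x /\ vnorm x <= 1 /\ forall i, (i < fst p)%nat -> 1/2 < vnorm (vsub x (snd p i))).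
  { intros [n e]. simpl. destruct (classic (forall i, (i < n)%nat -> N (e i))) as [Hv|Hv].
    - apply NNPP; intro Hk. apply Hn. exists n, e. split; auto. intros x Hx Hx1. apply NNPP; intro Hj. apply Hk.
      exists x. intros _. split; auto. split; auto. intros i Hi. destruct (Rle_lt_dec (vnorm (vsub x (e i))) (1/2)); auto.
      exfalso; apply Hj; exists i; auto.
    - exists vzero. intros; contradiction. }
  apply choice_fun in H. destruct H as [ch Hch].
  set (chc := fun j e => ch (j, e)).
  set (s := fun i => seqbuild chc vzero (S i) i).
  assert (Hs : forall j, s j = ch (j, seqbuild chc vzero j)).
  { intros j. unfold s. simpl. rewrite Nat.ltb_irrefl. auto. }
  assert (Hg : forall j i, (i < j)%nat -> seqbuild chc vzero j i = s i). { intros; apply seqbuild_stable; auto. }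
  assert (Hv : forall j, forall i, (i < j)%nat -> N (s i)).
  { induction j; intros i Hi. lia. destruct (Nat.eq_dec i j). subst. rewrite Hs. apply (Hch (j, _)). simpl.
    intros k Hk. rewrite Hg; auto. apply IHj; lia. }
  assert (Hprop : forall j, N (s j) /\ vnorm (s j) <= 1 /\ forall i, (i < j)%nat -> 1/2 < vnorm (vsub (s j) (s i))).
  { intros j. rewrite Hs. pose proof (Hch (j, seqbuild chc vzero j)) as Hc. simpl in Hc.
    destruct Hc as [h1 [h2 h3]]. intros k Hk. rewrite Hg; auto. apply (Hv j); auto.
    split; auto. split; auto. intros i Hi. rewrite <- (Hg j i Hi). auto. }
  apply (sep_false K s HK). intros; apply Hprop. intros m n Hmn.
  rewrite !HKN by apply Hprop. rewrite norm_sub_sym. left. apply Hprop; auto. Qed.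
Open Scope R_scope.

Fixpoint psum (t : nat -> nat -> R) (m i : nat) : R :=
  match m with O => 0 | S m' => psum t m' i + t m' i end.

Lemma expansion {V : Banach} (N : V -> Prop) n (e : nat -> V) : closed_subspace N ->
  (forall i, (i < n)%nat -> N (e i)) ->
  (forall x, N x -> vnorm x <= 1 -> exists i, (i < n)%nat /\ vnorm (vsub x (e i)) <= 1/2) ->
  forall x, N x -> vnorm x <= 1 -> exists c : nat -> R, x = lin_comb n (fun i => rs (c i)) e.
Proof. intros HN He Hnet x Hx Hx1.
  assert (H : forall y, exists i, (N y /\ vnorm y <= 1) -> (i < n)%nat /\ vnorm (vsub y (e i)) <= 1/2).
  { intros y. destruct (classic (N y /\ vnorm y <= 1)) as [[h1 h2]|h]. destruct (Hnet y h1 h2) as [i Hi]. exists i; auto.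
    exists O. intros; contradiction. }
  apply choice_fun in H. destruct H as [idx Hidx].
  set (step := fun y => vscal (rs 2) (vsub y (e (idx y)))).
  set (r := fun m => Nat.iter m step x).
  assert (Hr : forall m, N (r m) /\ vnorm (r m) <= 1).
  { induction m. simpl; auto. destruct IHm as [h1 h2]. destruct (Hidx (r m) (conj h1 h2)) as [h3 h4].
    change (r (S m)) with (step (r m)). unfold step. split.
    apply cs_scal; auto. apply cs_sub; auto. rewrite norm_scal_rs, Rabs_right by lra. lra. }
  set (t := fun k i => if Nat.eqb (idx (r k)) i then (/2)^k else 0).
  set (cf := psum t).
  assert (Hclaim : forall m, x = vadd (lin_comb n (fun i => rs (cf m i)) e) (vscal (rs ((/2)^m)) (r m))).
  { induction m.
    - rewrite (lin_comb_ext n _ (fun _ => rs 0)) by reflexivity. rewrite (lin_comb_zero n e).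
      simpl pow. rewrite scal1, add_zero. auto.
    - rewrite IHm at 1. change (cf (S m)) with (fun i => cf m i + t m i). simpl (fun i : nat => _).
      unfold t. destruct (Hidx (r m) (Hr m)) as [hi _].
      rewrite (lin_comb_delta n (idx (r m)) ((/2)^m) (cf m) e hi).
      change (r (S m)) with (step (r m)). unfold step. rewrite scal_rs_rs.
      replace ((/2)^(S m) * 2) with ((/2)^m) by (simpl; field).
      rewrite scal_sub. rewrite <- add_assoc. f_equal. rewrite add_comm, vsub_add_cancel. auto. }
  assert (Hcv : forall i, exists l, Un_cv (fun m => cf m i) l).
  { intros i. assert (Hg : Un_growing (fun m => cf m i)).
    { intros m. change (cf (S m) i) with (cf m i + t m i). unfold t. destruct (Nat.eqb _ _).
      pose proof (pow_le (/2) m ltac:(lra)). lra. lra. }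
    assert (Hb : forall m, cf m i <= 2 - 2 * (/2)^m).
    { induction m. change (cf O i) with 0. simpl; lra. change (cf (S m) i) with (cf m i + t m i). unfold t. simpl (_ ^ S m).
      pose proof (pow_le (/2) m ltac:(lra)). destruct (Nat.eqb _ _); lra. }
    destruct (growing_cv _ Hg) as [l Hl]. exists 2. intros y [k ->]. specialize (Hb k).
    pose proof (pow_le (/2) k ltac:(lra)). lra. exists l; auto. }
  apply choice_fun in Hcv. destruct Hcv as [c Hc]. exists c.
  apply (conv_unique (fun m => lin_comb n (fun i => rs (cf m i)) e)).
  - apply (conv_ext (fun m => vsub x (vscal (rs ((/2)^m)) (r m)))).
    intros m. rewrite (Hclaim m) at 1. apply vadd_sub_cancel.
    assert (Hs : conv (fun m => vscal (rs ((/2)^m)) (r m)) vzero).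
    2:{ pose proof (conv_sub (fun _ => x) _ x vzero (conv_const x) Hs) as HH. rewrite vsub_0_r in HH. exact HH. }
    apply conv_0. intros eps Heps. destruct (pow_lt_1_zero (/2) ltac:(rewrite Rabs_right; lra) eps Heps) as [M HM].
    exists M. intros m Hm. rewrite norm_scal_rs. specialize (HM m Hm). destruct (Hr m) as [_ h].
    pose proof (Rabs_pos ((/2)^m)). pose proof (norm_ge0 (r m)). nra.
  - apply lin_comb_conv. intros; apply Hc. Qed.

Lemma fin_dim {V : Banach} (K : V -> V) (N : V -> Prop) : compact_op K -> closed_subspace N ->
  (forall x, N x -> K x = x) ->
  exists n (e : nat -> V), forall x, N x -> exists c, x = lin_comb n c e.
Proof. intros HK HN HKN. destruct (net_exists K N HK HN HKN) as [n [e [He Hnet]]].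
  exists n, e. intros x Hx. set (s := vnorm x + 1). pose proof (norm_ge0 x).
  destruct (expansion N n e HN He Hnet (vscal (rs (/ s)) x)) as [c Hc].
  apply cs_scal; auto. rewrite norm_scal_rs, Rabs_right. unfold s. apply (Rmult_le_reg_l (vnorm x + 1)). lra.
  rewrite <- Rmult_assoc, Rinv_r by lra. lra. left. apply Rinv_0_lt_compat. unfold s; lra.
  exists (fun i => Cmul (rs s) (rs (c i))). rewrite <- lin_comb_scal, <- Hc, scal_rs_rs.
  replace (s * / s) with 1 by (field; unfold s; lra). rewrite scal1. auto. Qed.
Open Scope R_scope.

Fixpoint Kp {V : Banach} (K : V -> V) (n : nat) (y : V) : V :=
  match n with O => vzero | S n' => vadd (Kp K n' y) (K (vsub y (Kp K n' y))) end.

Definition Wp {V : Banach} (K : V -> V) (n : nat) (y : V) : V := Nat.iter n (Wf K) y.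

Lemma Wp_eq {V : Banach} (K : V -> V) n y : Wp K n y = Wf (Kp K n) y.
Proof. induction n. unfold Wp, Wf; simpl. rewrite vsub_0_r; auto.
  unfold Wp in *. simpl. rewrite IHn. unfold Wf at 1. unfold Wf. rewrite vsub_vadd_r. auto. Qed.

Lemma Kp_compact {V : Banach} (K : V -> V) n : compact_op K -> compact_op (Kp K n).
Proof. intros HK. induction n. apply compact_zero.
  apply (compact_add (Kp K n) (fun y => K (vsub y (Kp K n y)))); auto.
  apply (compact_comp_r K (fun y => vsub y (Kp K n y))); auto. apply (bounded_sub (fun y => y)).
  apply bounded_id. apply compact_bnd; auto. Qed.

Lemma Wp_S {V : Banach} (K : V -> V) n y : Wp K (S n) y = Wf K (Wp K n y).
Proof. reflexivity. Qed.
Lemma Wp_S_r {V : Banach} (K : V -> V) n y : Wp K (S n) y = Wp K n (Wf K y).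
Proof. unfold Wp. apply Nat.iter_succ_r. Qed.
Lemma Wp_add {V : Banach} (K : V -> V) a b y : Wp K (a + b) y = Wp K a (Wp K b y).
Proof. unfold Wp. apply Nat.iter_add. Qed.

Theorem riesz_main {V : Banach} (K : V -> V) : compact_op K ->
  exists M : V -> Prop, closed_subspace M /\ finite_codim M /\ exists c, forall y, M y -> vnorm y <= c * vnorm (Wf K y).
Proof. intros HK.
  pose proof (W_bnd K HK) as HW.
  assert (HWp : forall j, bounded_op (Wf (Kp K j))) by (intros; apply W_bnd, Kp_compact; auto).
  set (Nk := fun j x => Wf (Kp K j) x = vzero).
  set (Rk := fun j y => exists x, y = Wf (Kp K j) x).
  assert (NkE : forall j x, Nk j x <-> Wp K j x = vzero). { intros; unfold Nk; rewrite Wp_eq; tauto. }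
  assert (RkE : forall j y, Rk j y <-> exists x, y = Wp K j x).
  { intros; unfold Rk; split; intros [x Hx]; exists x; rewrite Hx; rewrite ?Wp_eq; auto. }
  assert (Nc : forall j, closed_subspace (Nk j)) by (intros; apply ker_closed; auto).
  assert (Rc : forall j, closed_subspace (Rk j)) by (intros; apply range_closed, Kp_compact; auto).
  destruct (chain_incr K Nk HK Nc) as [p Hp].
  { intros n x. rewrite !NkE, Wp_S. intros ->. apply lin0, HW. }
  { intros n x. rewrite !NkE, <- Wp_S_r. auto. }
  assert (Nup : forall j d x, Nk j x -> Nk (j + d)%nat x).
  { intros j d x. rewrite !NkE. rewrite Nat.add_comm, Wp_add. intros ->. induction d. reflexivity.
    simpl. rewrite IHd. apply lin0, HW. }
  assert (Nst : forall d x, Nk (p + d)%nat x -> Nk p x).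
  { induction d; intros x Hx. rewrite Nat.add_0_r in Hx; auto. apply Hp. rewrite NkE, Wp_S_r, <- NkE. apply IHd.
    rewrite NkE, <- Wp_S_r, <- Nat.add_succ_r, <- NkE. auto. }
  destruct (chain_decr K Rk HK Rc) as [q Hq].
  { intros n y. rewrite !RkE. intros [x ->]. exists (Wf K x). apply Wp_S_r. }
  { intros n y. rewrite !RkE. intros [x ->]. exists x. reflexivity. }
  assert (Rdown : forall j d y, Rk (j + d)%nat y -> Rk j y).
  { intros j d y. rewrite !RkE. intros [x ->]. exists (Wp K d x). apply Wp_add. }
  assert (Rst : forall d y, Rk q y -> Rk (q + d)%nat y).
  { induction d; intros y Hy. rewrite Nat.add_0_r; auto. specialize (IHd y Hy). rewrite RkE in IHd. destruct IHd as [x ->].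
    rewrite (Nat.add_comm q d), Wp_add. assert (Rk q (Wp K q x)) by (rewrite RkE; eauto).
    apply Hq in H. rewrite RkE in H. destruct H as [w Hw]. rewrite Hw, RkE. exists w.
    rewrite <- Wp_add. f_equal. lia. }
  set (k := (p + q)%nat).
  exists (Rk k). split. apply Rc. split.
  -
    destruct (fin_dim (Kp K k) (Nk k) (Kp_compact K k HK) (Nc k)) as [n [e He]].
    { intros x Hx. symmetry. apply vsub_eq0. apply Hx. }
    exists n, e. intros y.
    assert (Wsub : forall j a b, Wp K j (vsub a b) = vsub (Wp K j a) (Wp K j b)).
    { intros. rewrite !Wp_eq. apply lin_sub, HWp. }
    assert (H1 : Rk (k + k)%nat (Wp K k y)).
    { replace (k + k)%nat with (q + (p + k))%nat by (unfold k; lia). apply Rst.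
      apply (Rdown q p). replace (q + p)%nat with k by (unfold k; lia). rewrite RkE; eauto. }
    rewrite RkE in H1. destruct H1 as [z Hz]. rewrite Wp_add in Hz.
    destruct (He (vsub y (Wp K k z))) as [c Hc].
    { rewrite NkE, Wsub, Hz. apply vsub_diag. }
    exists c, (Wp K k z). split. rewrite RkE; eauto. rewrite <- Hc, add_comm, vsub_add_cancel. auto.
  -
    apply NNPP. intro Hn.
    assert (H : forall j, exists u, Rk k u /\ vnorm u = 1 /\ vnorm (Wf K u) <= / INR (S j)).
    { intros j. assert (exists y, Rk k y /\ INR (S j) * vnorm (Wf K y) < vnorm y).
      { apply NNPP; intro Hm. apply Hn. exists (INR (S j)). intros y Hy.
        destruct (Rle_lt_dec (vnorm y) (INR (S j) * vnorm (Wf K y))); auto. exfalso; apply Hm; eauto. }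
      destruct H as [y [Hy Hy2]]. pose proof (norm_ge0 (Wf K y)). pose proof (lt_0_INR (S j) ltac:(lia)).
      assert (Py : 0 < vnorm y) by nra.
      exists (vscal (rs (/ vnorm y)) y). split. apply cs_scal; auto. split. apply norm_normalize; auto.
      rewrite lin_scal by apply HW. rewrite norm_scal_rs, Rabs_right by (left; apply Rinv_0_lt_compat; auto).
      apply (Rmult_le_reg_l (vnorm y * INR (S j))). nra.
      replace (vnorm y * INR (S j) * (/ vnorm y * vnorm (Wf K y))) with (INR (S j) * vnorm (Wf K y)) by (field; lra).
      replace (vnorm y * INR (S j) * / INR (S j)) with (vnorm y) by (field; lra). lra. }
    apply choice_fun in H. destruct H as [u Hu].
    assert (Hb : exists B, forall n, vnorm (u n) <= B) by (exists 1; intro n; rewrite (proj1 (proj2 (Hu n))); lra).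
    assert (Hc0 : conv (fun n => vsub (u n) (K (u n))) vzero).
    { apply conv_of_bound. intros; rewrite vsub_0_r; apply Hu. }
    destruct (approx_kernel K u HK Hb Hc0) as [phi [v [Hp' [Hc Hv]]]].
    assert (Rv : Rk k v). { destruct (Rc k) as [_ [_ [_ Hcl]]]. apply (Hcl (fun n => u (phi n))); auto. intros; apply Hu. }
    assert (Nv : vnorm v = 1).
    { apply Rle_antisym. apply (conv_norm_le _ _ 1 Hc). intros; rewrite (proj1 (proj2 (Hu _))); lra.
      apply (conv_norm_ge _ _ 1 Hc). intros; rewrite (proj1 (proj2 (Hu _))); lra. }
    rewrite RkE in Rv. destruct Rv as [z Hz].
    assert (Nk (S k) z). { rewrite NkE, Wp_S, <- Hz. apply Hv. }
    assert (Nk k z). { apply (Nup p q). unfold k in H. apply (Nst (S q)). replace (p + S q)%nat with (S (p + q)) by lia. auto. }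
    rewrite NkE, <- Hz in H0. rewrite H0, norm0 in Nv. lra.
Qed.
Open Scope R_scope.

Lemma dnorm_ge0 {A B : Banach} (p : dsum A B) : 0 <= vnorm p.
Proof. apply sqrt_pos. Qed.
Lemma dnorm_fst {A B : Banach} (p : dsum A B) : vnorm (fst p) <= vnorm p.
Proof. destruct p as [x y]. simpl. pose proof (norm_ge0 x). rewrite <- (sqrt_pow2 (vnorm x)) at 1 by auto.
  apply sqrt_le_1_alt. pose proof (pow2_ge_0 (vnorm y)). lra. Qed.
Lemma dnorm_snd {A B : Banach} (p : dsum A B) : vnorm (snd p) <= vnorm p.
Proof. destruct p as [x y]. simpl. pose proof (norm_ge0 y). rewrite <- (sqrt_pow2 (vnorm y)) at 1 by auto.
  apply sqrt_le_1_alt. pose proof (pow2_ge_0 (vnorm x)). lra. Qed.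
Lemma dnorm_l {A B : Banach} (x : A) : vnorm ((x, @vzero B) : dsum A B) = vnorm x.
Proof. change (vnorm ((x, @vzero B) : dsum A B)) with (sqrt (vnorm x ^ 2 + vnorm (@vzero B) ^ 2)). rewrite norm0. replace (vnorm x ^ 2 + 0 ^ 2) with (vnorm x ^ 2) by ring. apply sqrt_pow2, norm_ge0. Qed.
Lemma dnorm_r {A B : Banach} (y : B) : vnorm ((@vzero A, y) : dsum A B) = vnorm y.
Proof. change (vnorm ((@vzero A, y) : dsum A B)) with (sqrt (vnorm (@vzero A) ^ 2 + vnorm y ^ 2)). rewrite norm0. replace (0 ^ 2 + vnorm y ^ 2) with (vnorm y ^ 2) by ring. apply sqrt_pow2, norm_ge0. Qed.

Lemma dbounded_pos {A B : NVS} (f : A -> B) : (forall x : B, 0 <= vnorm x) -> (forall x : A, 0 <= vnorm x) -> bounded_op f ->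
  exists K, 0 < K /\ forall x, vnorm (f x) <= K * vnorm x.
Proof. intros H1 H2 [_ [K HK]]. exists (Rabs K + 1). split. pose proof (Rabs_pos K); lra.
  intros x. specialize (HK x). pose proof (H2 x).
  assert (K <= Rabs K + 1) by (pose proof (Rle_abs K); lra). nra. Qed.

Lemma lin_inl {A B D : Banach} (f : dsum A B -> D) : linear f -> linear (fun x : A => f (x, vzero)).
Proof. intros [Ha Hs]. split.
  - intros x y. rewrite <- Ha. simpl. rewrite add_zero. auto.
  - intros c x. rewrite <- Hs. simpl. rewrite scal_v0. auto. Qed.
Lemma lin_inr {A B D : Banach} (f : dsum A B -> D) : linear f -> linear (fun y : B => f (vzero, y)).
Proof. intros [Ha Hs]. split.
  - intros x y. rewrite <- Ha. simpl. rewrite add_zero. auto.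
  - intros c x. rewrite <- Hs. simpl. rewrite scal_v0. auto. Qed.
Lemma lin_inl2 {A B A2 B2 : Banach} (f : dsum A B -> dsum A2 B2) : linear f -> linear (fun x : A => f (x, vzero)).
Proof. intros [Ha Hs]. split.
  - intros x y. rewrite <- Ha. simpl. rewrite add_zero. auto.
  - intros c x. rewrite <- Hs. simpl. rewrite scal_v0. auto. Qed.
Lemma lin_inr2 {A B A2 B2 : Banach} (f : dsum A B -> dsum A2 B2) : linear f -> linear (fun y : B => f (vzero, y)).
Proof. intros [Ha Hs]. split.
  - intros x y. rewrite <- Ha. simpl. rewrite add_zero. auto.
  - intros c x. rewrite <- Hs. simpl. rewrite scal_v0. auto. Qed.

Theorem theorem5p3 (X Y : Banach) (T : X -> X) (S : Y -> Y) :
  bounded_op T -> bounded_op S ->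
  equiv_after_ext X Y T S ->
  compact_op S ->
  exists (M : Y -> Prop) (N : X -> Prop),
    closed_subspace M /\ finite_codim M /\ closed_subspace N /\ topo_iso M N.
Proof.
  intros HT HS [X' [Y' [E [F [HE [HF Heq]]]]]] HSc.
  destruct HF as [HFb [G [HGb [HGF HFG]]]]. destruct HE as [HEb _].
  destruct (dbounded_pos E dnorm_ge0 dnorm_ge0 HEb) as [KE [PE BE]].
  destruct (dbounded_pos F dnorm_ge0 dnorm_ge0 HFb) as [KF [PF BF]].
  destruct (dbounded_pos G dnorm_ge0 dnorm_ge0 HGb) as [KG [PG BG]].
  set (a := fun y : Y => fst (G (y, @vzero Y'))).
  assert (Ha : bounded_op a).
  { pose proof (lin_inl2 G (proj1 HGb)) as [h1 h2]. split. split.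
    - intros x y. unfold a. rewrite h1. reflexivity.
    - intros c x. unfold a. rewrite h2. reflexivity.
    - exists KG. intros y. unfold a. eapply Rle_trans. apply dnorm_fst. rewrite <- (dnorm_l (B:=Y') y). apply BG. }
  set (L := fun y' : Y => fst (F (@vzero X, snd (E (y', @vzero Y'))))).
  assert (HL : bounded_op L).
  { pose proof (lin_inl2 E (proj1 HEb)) as [e1 e2]. pose proof (lin_inr2 F (proj1 HFb)) as [f1 f2]. split. split.
    - intros x y. unfold L. rewrite e1. simpl snd. rewrite f1. reflexivity.
    - intros c x. unfold L. rewrite e2. simpl snd. rewrite f2. reflexivity.
    - exists (KF * KE). intros y. unfold L. eapply Rle_trans. apply dnorm_fst. eapply Rle_trans. apply BF.
      rewrite dnorm_r. rewrite Rmult_assoc. apply Rmult_le_compat_l. lra. eapply Rle_trans. apply dnorm_snd.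
      rewrite <- (dnorm_l (B:=Y') y). apply BE. }
  set (K := fun y => L (S y)).
  assert (HK : compact_op K) by (apply (compact_comp_l L S); auto).
  assert (HWK : forall y, Wf K y = fst (F (a y, @vzero X'))).
  { intros y. set (P := G (y, @vzero Y')).
    assert (E1 : F P = (y, vzero)) by apply HFG.
    pose proof (Heq P) as E2. rewrite E1 in E2. unfold diag_id in E2. simpl fst in E2. simpl snd in E2.
    assert (E3 : snd P = snd (E (S y, vzero))) by (rewrite <- E2; reflexivity).
    assert (E4 : P = vadd ((fst P, @vzero X') : dsum X X') ((@vzero X, snd P) : dsum X X')).
    { destruct P as [p1 p2]. simpl. rewrite add_zero, vadd_0_r. reflexivity. }
    assert (E5 : y = vadd (fst (F (a y, @vzero X'))) (K y)).
    { change y with (fst ((y, @vzero Y') : dsum Y Y')) at 1. rewrite <- E1, E4, (proj1 (proj1 HFb)).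
      simpl fst at 1. f_equal. unfold K, L. rewrite <- E3. reflexivity. }
    unfold Wf. rewrite E5 at 1. apply vadd_sub_cancel. }
  destruct (riesz_main K HK) as [M [HMc [HMf [c Hc]]]].
  set (C1 := Rabs c * KF).
  assert (HC1 : forall y, M y -> vnorm y <= C1 * vnorm (a y)).
  { intros y Hy. eapply Rle_trans. apply Hc; auto. rewrite HWK. unfold C1.
    pose proof (Rle_abs c). pose proof (Rabs_pos c). pose proof (dnorm_fst (F (a y, @vzero X'))).
    pose proof (BF (a y, @vzero X')). rewrite dnorm_l in H2. pose proof (norm_ge0 (fst (F (a y, @vzero X')))).
    pose proof (norm_ge0 (a y)). 
    apply Rle_trans with (Rabs c * vnorm (fst (F (a y, vzero)))). nra. rewrite Rmult_assoc. apply Rmult_le_compat_l; lra. }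
  assert (Hal : linear a) by apply Ha.
  set (N := fun x => exists y, M y /\ x = a y).
  exists M, N. split; auto. split; auto.
  assert (HN : closed_subspace N).
  { split. exists vzero. split. apply HMc. symmetry; apply lin0; auto.
    split. intros x1 x2 [y1 [M1 ->]] [y2 [M2 ->]]. exists (vadd y1 y2). split. apply cs_add; auto. symmetry; apply lin_add; auto.
    split. intros c0 x [y [My ->]]. exists (vscal c0 y). split. apply cs_scal; auto. symmetry; apply lin_scal; auto.
    intros u l Hu Hl. apply choice_fun in Hu. destruct Hu as [y Hy].
    assert (Hcy : cauchy y).
    { intros eps Heps. destruct (conv_cauchy u l Hl (eps / (Rabs C1 + 1))) as [N0 HN0].
      apply Rdiv_lt_0_compat; auto. pose proof (Rabs_pos C1); lra.
      exists N0. intros m n Hm Hn. specialize (HN0 m n Hm Hn).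
      assert (Msub : M (vsub (y m) (y n))) by (apply cs_sub; auto; apply Hy).
      pose proof (HC1 _ Msub). rewrite lin_sub in H by auto. rewrite <- (proj2 (Hy m)), <- (proj2 (Hy n)) in H.
      pose proof (Rle_abs C1). pose proof (Rabs_pos C1). pose proof (norm_ge0 (vsub (u m) (u n))).
      apply (Rmult_lt_compat_l (Rabs C1 + 1)) in HN0. 2: lra.
      replace ((Rabs C1 + 1) * (eps / (Rabs C1 + 1))) with eps in HN0 by (field; lra). nra. }
    destruct (complete y Hcy) as [ys Hys]. exists ys. split.
    destruct HMc as [_ [_ [_ Hcl]]]. apply (Hcl y); auto. intros; apply Hy.
    eapply conv_unique. apply Hl. apply (conv_ext (fun n => a (y n))). intros; symmetry; apply Hy. apply conv_lin; auto. }
  split; auto.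
  set (g := fun x => epsilon (inhabits (@vzero Y)) (fun y => M y /\ x = a y)).
  assert (Hg : forall x, N x -> M (g x) /\ x = a (g x)).
  { intros x Hx. apply (epsilon_spec (inhabits (@vzero Y)) (fun y => M y /\ x = a y)). auto. }
  exists a, g. split. intros y Hy. exists y; auto. split. intros x Hx. apply Hg; auto.
  split. intros y Hy. destruct (Hg (a y)) as [h1 h2]. exists y; auto.
  { apply vsub_eq0. apply norm_eq0. apply Rle_antisym. 2: apply norm_ge0.
    assert (Ms : M (vsub (g (a y)) y)) by (apply cs_sub; auto). pose proof (HC1 _ Ms).
    rewrite lin_sub, <- h2, vsub_diag, norm0 in H by auto. lra. }
  split. intros x Hx. symmetry; apply Hg; auto.
  split. intros; apply lin_add; auto. split. intros; apply lin_scal; auto.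
  split. destruct Ha as [_ [Ka HKa]]. exists Ka. intros; apply HKa.
  exists C1. intros x Hx. destruct (Hg x Hx) as [h1 h2]. rewrite h2 at 2. apply HC1; auto.
Qed.
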